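(* Let $\mathcal I$ index a finite set of strategies for the iterated Prisoner's Dilemma. Suppose that the strategy indexed by $i^*\in\mathcal I$ consists of a good memory-one strategy vector $\mathbf p^{i^*}$ together with initial cooperation, and that for no other $j\in\mathcal I$ is the strategy vector $\mathbf p^j$ agreeable. Then $i^*$ is an evolutionarily stable strategy for the game $\{A_{ij}:i,j\in\mathcal I\}$, and the vertex $v(i^* )$ is an attractor (a locally asymptotically stable equilibrium) of the replicator dynamics.
   Context: Iterated Prisoner's Dilemma: payoffs $T>R>P>S$ with $2R>T+S$; outcomes ordered $cc,cd,dc,dd$ (first letter X's play, second Y's; $c$ = cooperate, $d$ = defect); payoff vectors $\mathbf S_X=(R,S,T,P)$, $\mathbf S_Y=(R,T,S,P)$. A memory-one strategy vector is $\mathbf p\in[0,1]^4$, $p_i$ being the probability of playing $c$ after the $i$-th outcome, where outcomes are labeled from the player's own perspective (own play first); it is agreeable if $p_1=1$. A strategy is such a vector together with an initial play (probability of $c$ in round one). For a strategy pattern of the opponent (any possibly random, history-dependent rule), a limit distribution is a limit point $\mathbf v$ of the Cesàro averages of the round-$n$ outcome distributions, with payoffs $s_X=\langle\mathbf v\cdot\mathbf S_X\rangle$, $s_Y=\langle\mathbf v\cdot\mathbf S_Y\rangle$. A memory-one $\mathbf p$ for X is good if it is agreeable and for every strategy pattern of Y and every associated limit distribution $s_Y\ge R$ implies $s_Y=s_X=R$. For $i,j\in\mathcal I$, $A_{ij}$ is the long-run average payoff $s_X$ of X when X uses strategy $i$ and Y uses strategy $j$ (the Cesàro limit exists). Replicator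 dynamics: on the simplex $\Delta=\{\pi\in\mathbb R^{\mathcal I}:\pi_i\ge0,\sum\pi_i=1\}$, $\frac{d\pi_i}{dt}=\pi_i(A_{i\pi}-A_{\pi\pi})$ with $A_{i\pi}=\sum_j\pi_jA_{ij}$, $A_{\pi\pi}=\sum_i\pi_iA_{i\pi}$; $v(i)$ is the vertex with $\pi_i=1$. $i^*$ is an evolutionarily stable strategy (ESS) if $A_{ji^*}<A_{i^*i^*}$ for all $j\neq i^*$. *)

(* Defs.v *)
From mathcomp Require Import all_boot all_order all_algebra.
From mathcomp Require Import all_classical all_reals all_analysis.
Set Implicit Arguments. Unset Strict Implicit. Unset Printing Implicit Defensive.
Import Order.TTheory GRing.Theory Num.Theory.
Import numFieldNormedType.Exports.
Local Open Scope ring_scope.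

(* An outcome of one round: (X's play, Y's play), true = c, false = d.
   Ordering cc, cd, dc, dd = (true,true), (true,false), (false,true), (false,false). *)
Definition outcome := (bool * bool)%type.

Section IPD.
Variable R : realType.

(* Payoff vectors S_X = (R,S,T,P), S_Y = (R,T,S,P); Rw is the reward R. *)
Definition SX (T Rw P S : R) (o : outcome) : R :=
  match o with
  | (true, true) => Rw | (true, false) => S | (false, true) => T | (false, false) => P
  end.
Definition SY (T Rw P S : R) (o : outcome) : R :=
  match o with
  | (true, true) => Rw | (true, false) => T | (false, true) => S | (false, false) => P
  end.

Definition is_PD (T Rw P S : R) : Prop :=
  [/\ S < P, P < Rw, Rw < T & T + S < 2 * Rw].

(* A memory-one strategy vector p : outcome -> R; p o is the probability of
   playing c after outcome o, o labelled from the player's own perspective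
   (own play first). p1 = p (true,true), ..., p4 = p (false,false). *)
Definition mem1_vec (p : outcome -> R) : Prop := forall o, 0 <= p o <= 1.
Definition prob (x : R) : Prop := 0 <= x <= 1.
Definition agreeable (p : outcome -> R) : Prop := p (true, true) = 1.

(* A strategy pattern for Y (behaviour rule, possibly random and
   history-dependent): given the history of outcomes so far (chronological,
   each outcome written (X's play, Y's play)), the probability that Y plays c. *)
Definition pattern_valid (b : seq outcome -> R) : Prop := forall h, 0 <= b h <= 1.

Definition pr_out (a c : R) (o : outcome) : R :=
  (if o.1 then a else 1 - a) * (if o.2 then c else 1 - c).

Definition xprob (p : outcome -> R) (x0 : R) (h : seq outcome) : R :=
  if h is [::] then x0 else p (last (true, true) h).

Definition hist_prob (p : outcome -> R) (x0 : R) (b : seq outcome -> R)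
  (h : seq outcome) : R :=
  \prod_(k < size h) pr_out (xprob p x0 (take k h)) (b (take k h)) (nth (true, true) h k).

Definition round_dist (p : outcome -> R) (x0 : R) (b : seq outcome -> R)
  (n : nat) (o : outcome) : R :=
  \sum_(h : n.-tuple outcome)
     hist_prob p x0 b h * pr_out (xprob p x0 h) (b h) o.

Definition cesaro (p : outcome -> R) (x0 : R) (b : seq outcome -> R)
  (n : nat) (o : outcome) : R :=
  (n.+1%:R)^-1 * \sum_(k < n.+1) round_dist p x0 b k o.

Definition limit_dist (p : outcome -> R) (x0 : R) (b : seq outcome -> R)
  (v : outcome -> R) : Prop :=
  forall e : R, 0 < e -> forall N : nat, exists n : nat,
    (N <= n)%N /\ forall o, `|cesaro p x0 b n o - v o| < e.

Definition sXv (T Rw P S : R) (v : outcome -> R) : R := \sum_o v o * SX T Rw P S o.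
Definition sYv (T Rw P S : R) (v : outcome -> R) : R := \sum_o v o * SY T Rw P S o.

Definition good (T Rw P S : R) (p : outcome -> R) : Prop :=
  agreeable p /\
  forall (x0 : R) (b : seq outcome -> R) (v : outcome -> R),
    prob x0 -> pattern_valid b -> limit_dist p x0 b v ->
    Rw <= sYv T Rw P S v -> sYv T Rw P S v = Rw /\ sXv T Rw P S v = Rw.

(* Y playing the memory-one strategy (q, y0): Y labels outcomes own play first. *)
Definition swap_out (o : outcome) : outcome := (o.2, o.1).
Definition mem1_pattern (q : outcome -> R) (y0 : R) : seq outcome -> R :=
  fun h => if h is [::] then y0 else q (swap_out (last (true, true) h)).

Definition payoff_matrix (I : finType) (T Rw P S : R)
  (p : I -> outcome -> R) (x0 : I -> R) (i j : I) : R :=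
  limn (fun n => sXv T Rw P S (cesaro (p i) (x0 i) (mem1_pattern (p j) (x0 j)) n)).

Definition ESS (I : finType) (A : I -> I -> R) (istar : I) : Prop :=
  forall j, j != istar -> A j istar < A istar istar.

Definition repl_field (I : finType) (A : I -> I -> R) (pi : I -> R) (i : I) : R :=
  pi i * (\sum_j pi j * A i j - \sum_k pi k * (\sum_j pi j * A k j)).

Definition in_simplex (I : finType) (pi : I -> R) : Prop :=
  (forall i, 0 <= pi i) /\ \sum_i pi i = 1.

Definition vertex (I : finType) (istar : I) : I -> R :=
  fun i => if i == istar then 1 else 0.

Definition repl_solution (I : finType) (A : I -> I -> R) (sol : R -> I -> R) : Prop :=
  forall (t : R) (i : I), is_derive t 1 (fun s => sol s i) (repl_field A (sol t) i).

Definition attractor (I : finType) (A : I -> I -> R) (v : I -> R) : Prop :=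
  [/\ in_simplex v,
      (forall i, repl_field A v i = 0),
      (forall e : R, 0 < e -> exists d : R, 0 < d /\
         forall sol, repl_solution A sol -> in_simplex (sol 0) ->
           (forall i, `|sol 0 i - v i| < d) ->
           forall t, 0 <= t -> forall i, `|sol t i - v i| < e)
    & (exists d : R, 0 < d /\
         forall sol, repl_solution A sol -> in_simplex (sol 0) ->
           (forall i, `|sol 0 i - v i| < d) ->
           forall i (e : R), 0 < e -> exists M : R, forall t, M <= t ->
             `|sol t i - v i| < e)].

End IPD.

(* Main.v *)
Require Import Defs.
From mathcomp Require Import all_boot all_order all_algebra.
From mathcomp Require Import all_classical all_reals all_analysis.
From mathcomp Require ring lra zify.
Import Order.TTheory GRing.Theory Num.Theory.
Local Open Scope ring_scope.

Module MP1.
Set Implicit Arguments. Unset Strict Implicit. Unset Printing Implicit Defensive.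
Import Order.TTheory GRing.Theory Num.Theory.
Import numFieldNormedType.Exports.
Import ring lra zify.
Local Open Scope ring_scope.

Section Markov.
Variable R : realType.

Lemma sum_tuple_rcons (T : finType) n (F : n.+1.-tuple T -> R) :
  \sum_(h : n.+1.-tuple T) F h =
  \sum_(h : n.-tuple T) \sum_(o : T) F [tuple of rcons h o].
Proof.
rewrite pair_big /=.
pose f (x : n.-tuple T * T) : n.+1.-tuple T := [tuple of rcons x.1 x.2].
pose g (t : n.+1.-tuple T) : n.-tuple T * T :=
  ([tuple of belast (thead t) (behead t)], last (thead t) (behead t)).
rewrite (reindex f) /=; last first.
  exists g => [[h o]|t] _.
    rewrite /f /g /=; congr pair.
      apply: val_inj => /=.
      case: h => [[|x s] /= sz].
        by [].
      by rewrite /thead (tnth_nth x) /= belast_rcons.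
    case: h => [[|x s] /= sz].
      by [].
    by rewrite /thead (tnth_nth x) /= last_rcons.
  apply: val_inj => /=; rewrite /f /g /=.
  by rewrite [in RHS](tuple_eta t) /= -lastI.
by apply: eq_bigr => -[h o].
Qed.

Variables (p : outcome -> R) (x0 : R) (b : seq outcome -> R).

Lemma hist_prob_rcons h o :
  hist_prob p x0 b (rcons h o) =
  hist_prob p x0 b h * pr_out (xprob p x0 h) (b h) o.
Proof.
rewrite /hist_prob size_rcons big_ord_recr /=.
rewrite -cats1 take_size_cat // nth_cat ltnn subnn /=; congr (_ * _).
apply: eq_bigr => i _.
have hi : (i < size h)%N := ltn_ord i.
by rewrite takel_cat ?(ltnW hi) // nth_cat hi.
Qed.

Lemma hist_prob_nil : hist_prob p x0 b [::] = 1.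
Proof. by rewrite /hist_prob big_ord0. Qed.

End Markov.

Section Markov2.
Variable R : realType.

Definition Mtr (p q : outcome -> R) (o o' : outcome) : R :=
  pr_out (p o) (q (swap_out o)) o'.

Fixpoint Dist (p : outcome -> R) (x0 : R) (q : outcome -> R) (y0 : R)
  (n : nat) : outcome -> R :=
  match n with
  | 0 => pr_out x0 y0
  | n'.+1 => fun o' => \sum_o Dist p x0 q y0 n' o * Mtr p q o o'
  end.

Lemma round_dist_rcons p x0 (b : seq outcome -> R) n o :
  round_dist p x0 b n o = \sum_(h : n.-tuple outcome) hist_prob p x0 b (rcons h o).
Proof. by apply: eq_bigr => h _; rewrite hist_prob_rcons. Qed.

Lemma xprob_rcons (p : outcome -> R) x0 h o : xprob p x0 (rcons h o) = p o.
Proof. by case: h => [|x s] //=; rewrite last_rcons. Qed.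

Lemma mem1_rcons (q : outcome -> R) y0 h o :
  mem1_pattern q y0 (rcons h o) = q (swap_out o).
Proof. by case: h => [|x s] //=; rewrite last_rcons. Qed.

Lemma round_distE p x0 q y0 n o :
  round_dist p x0 (mem1_pattern q y0) n o = Dist p x0 q y0 n o.
Proof.
elim: n o => [|n IH] o.
  rewrite /round_dist /= (big_pred1 [tuple]); last first.
    by move=> t; apply/esym/eqP; apply: val_inj; case: t => -[].
  by rewrite hist_prob_nil mul1r.
rewrite /= /round_dist sum_tuple_rcons.
transitivity (\sum_(h : n.-tuple outcome) \sum_o1
   hist_prob p x0 (mem1_pattern q y0) (rcons h o1) * Mtr p q o1 o).
  apply: eq_bigr => h _; apply: eq_bigr => o1 _.
  by rewrite /= xprob_rcons mem1_rcons.
rewrite exchange_big /=; apply: eq_bigr => o1 _.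
rewrite -IH round_dist_rcons mulr_suml.
by apply: eq_bigr.
Qed.

End Markov2.

End MP1.

Module MP2.
Set Implicit Arguments. Unset Strict Implicit. Unset Printing Implicit Defensive.
Import Order.TTheory GRing.Theory Num.Theory.
Import numFieldNormedType.Exports.
Import ring lra zify.
Local Open Scope ring_scope.
Import MP1.

Section Ces.
Variable R : realType.
Variables (n : nat) (M : 'M[R]_n).
Hypothesis M_ge0 : forall i j, 0 <= M i j.
Hypothesis M_sum1 : forall i, \sum_j M i j = 1.

Definition pw m k (Y : 'M[R]_(m, n)) := iter k (fun X => X *m M) Y.

Lemma pwS m k (Y : 'M[R]_(m, n)) : pw k.+1 Y = pw k Y *m M.
Proof. by []. Qed.

Arguments pw : simpl never.

Lemma pwSr m k (Y : 'M[R]_(m, n)) : pw k.+1 Y = pw k (Y *m M).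
Proof.
elim: k => [//|k IH]; by rewrite pwS IH.
Qed.

Lemma pw_rowsum m k (Y : 'M[R]_(m, n)) i :
  \sum_j `|pw k Y i j| <= \sum_j `|Y i j|.
Proof.
elim: k => [//|k IH]; rewrite pwS; apply: le_trans IH.
under eq_bigr => j _ do rewrite mxE.
apply: (@le_trans _ _ (\sum_j \sum_l `|pw k Y i l| * M l j)).
  apply: ler_sum => j _; apply: le_trans (ler_norm_sum _ _ _) _.
  by apply: ler_sum => l _; rewrite normrM (ger0_norm (M_ge0 _ _)).
rewrite exchange_big /=; apply: ler_sum => l _.
by rewrite -mulr_sumr M_sum1 mulr1.
Qed.

Lemma pw_bound m k (Y : 'M[R]_(m, n)) i j :
  `|pw k Y i j| <= \sum_l `|Y i l|.
Proof.
apply: le_trans (pw_rowsum k Y i).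
rewrite (bigD1 j) //= lerDl; apply: sumr_ge0 => *; exact: normr_ge0.
Qed.

Lemma fixed_range_eq0 (X D : 'M[R]_n) :
  X *m M = X -> D *m M = D + X -> X = 0.
Proof.
move=> hX hD.
have pwD : forall k, pw k D = D + k%:R *: X.
  elim=> [|k IH]; first by rewrite /= scale0r addr0.
  rewrite pwS IH mulmxDl -scalemxAl hX hD -addrA; congr (_ + _).
  by rewrite -{1}(scale1r X) -scalerDl addrC -natr1.
apply/matrixP => i j; rewrite mxE; apply/eqP; apply/negPn/negP => hne.
set C := \sum_l `|D i l| + `|D i j|.
have hb : forall k, k%:R * `|X i j| <= C.
  move=> k; have := pw_bound k D i j.
  rewrite pwD !mxE => h.
  have: `|k%:R * X i j| <= `|D i j + k%:R * X i j| + `|D i j|.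
    have e : k%:R * X i j = (D i j + k%:R * X i j) - D i j by rewrite addrC addKr.
    rewrite [in X in X <= _]e; exact: ler_normB.
  rewrite normrM ger0_norm ?ler0n // => h2.
  by apply: le_trans h2 _; rewrite /C lerD2r.
have hx : 0 < `|X i j| by rewrite normr_gt0.
have hC : 0 <= C / `|X i j|.
  by apply: divr_ge0 => //; apply: le_trans (hb 0%N); rewrite mul0r.
have := hb (Num.bound (C / `|X i j|)).
rewrite -ler_pdivlMr // leNgt => /negP; apply.
exact: archi_boundP.
Qed.

Lemma decomp (mu : 'rV[R]_n) :
  exists a y : 'rV[R]_n, mu = a + (y *m M - y) /\ a *m M = a.
Proof.
set B := M - 1%:M.
have capB : (kermx B :&: B)%MS = 0.
  set X := (kermx B :&: B)%MS.
  have h1 : (X <= kermx B)%MS by exact: capmxSl.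
  have h2 : (X <= B)%MS by exact: capmxSr.
  move/sub_kermxP: h1 => h1; move/submxP: h2 => [D hD].
  apply: (@fixed_range_eq0 X D).
    by move: h1; rewrite /B mulmxBr mulmx1 => /eqP; rewrite subr_eq0 => /eqP.
  by rewrite hD /B mulmxBr mulmx1 addrCA subrr addr0.
have hfull : row_full (kermx B + B)%MS.
  rewrite /row_full; apply/eqP.
  have := mxrank_sum_cap (kermx B) B.
  rewrite capB mxrank0 addn0 mxrank_ker => ->.
  rewrite subnK //; exact: rank_leq_row.
have /sub_addsmxP [[u1 u2] /= hmu] := submx_full mu hfull.
exists (u1 *m kermx B), u2; split.
  by rewrite hmu /B mulmxBr mulmx1.
have hk : u1 *m kermx B *m B = 0 by rewrite -mulmxA mulmx_ker mulmx0.
by move: hk; rewrite /B mulmxBr mulmx1 => /eqP; rewrite subr_eq0 => /eqP.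
Qed.

Lemma pwD m k (Y Z : 'M[R]_(m, n)) : pw k (Y + Z) = pw k Y + pw k Z.
Proof. elim: k => [//|k IH]; by rewrite !pwS IH mulmxDl. Qed.

Lemma pwB m k (Y Z : 'M[R]_(m, n)) : pw k (Y - Z) = pw k Y - pw k Z.
Proof. elim: k => [//|k IH]; by rewrite !pwS IH mulmxBl. Qed.

Lemma pw_fix m k (Y : 'M[R]_(m, n)) : Y *m M = Y -> pw k Y = Y.
Proof. move=> h; elim: k => [//|k IH]; by rewrite pwS IH h. Qed.

Definition cesM k (mu : 'rV[R]_n) : 'rV[R]_n :=
  (k.+1%:R)^-1 *: \sum_(i < k.+1) pw i mu.

Lemma cesM_cvg (mu : 'rV[R]_n) : exists a : 'rV[R]_n, a *m M = a /\
  forall j e, 0 < e -> exists N, forall k, (N <= k)%N ->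
     `|cesM k mu 0 j - a 0 j| < e.
Proof.
have [a [y [hmu ha]]] := decomp mu.
exists a; split => // j e e0.
have hsum : forall k, \sum_(i < k.+1) pw i mu = k.+1%:R *: a + (pw k.+1 y - y).
  elim=> [|k IH].
    by rewrite big_ord1 hmu pwD pw_fix // scale1r.
  rewrite big_ord_recr /= IH hmu pwD (pw_fix _ ha) pwB -pwSr.
  apply/matrixP => i l; rewrite !mxE mulrS; ring.
have hces : forall k, cesM k mu 0 j - a 0 j =
     (pw k.+1 y 0 j - y 0 j) / k.+1%:R.
  move=> k; rewrite /cesM hsum scalerDr scalerA mulVf ?pnatr_eq0 // scale1r.
  by rewrite !mxE addrAC subrr add0r mulrC.
set C := \sum_l `|y 0 l| + `|y 0 j| + 1.
have C0 : 0 < C.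
  rewrite /C ltr_pwDr // addr_ge0 //; apply: sumr_ge0 => *; exact: normr_ge0.
exists (Num.bound (C / e)) => k hk.
rewrite hces normrM normfV normr_nat ltr_pdivrMr ?ltr0n //.
apply: (@le_lt_trans _ _ C).
  rewrite /C; apply: (@le_trans _ _ (\sum_l `|y 0 l| + `|y 0 j|)); last by rewrite lerDl.
  apply: le_trans (ler_normB _ _) _.
  by rewrite lerD2r pw_bound.
rewrite -ltr_pdivrMl //.
apply: lt_le_trans (archi_boundP _) _; first by apply: mulr_ge0; [rewrite invr_ge0|]; exact: ltW.
rewrite mulrC ler_nat; exact: leqW.
Qed.

End Ces.

End MP2.

Module MP3.
Set Implicit Arguments. Unset Strict Implicit. Unset Printing Implicit Defensive.
Import Order.TTheory GRing.Theory Num.Theory.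
Import numFieldNormedType.Exports.
Import ring lra zify.
Local Open Scope ring_scope.
Import MP1 MP2.

Section Out.
Variable R : realType.

Lemma sum_outcome (G : outcome -> R) :
  \sum_(o : outcome) G o =
  G (true, true) + G (true, false) + G (false, true) + G (false, false).
Proof.
rewrite (eq_bigr (fun o => G (o.1, o.2))); last by case.
rewrite -(pair_big xpredT xpredT (fun a b => G (a, b))) /= !big_bool /=.
by rewrite addrA.
Qed.

Lemma pr_out_ge0 (a c : R) o : 0 <= a <= 1 -> 0 <= c <= 1 -> 0 <= pr_out a c o.
Proof.
move=> /andP[a0 a1] /andP[c0 c1]; rewrite /pr_out.
by apply: mulr_ge0; case: ifP => _; rewrite ?subr_ge0.
Qed.

Lemma pr_out_sum (a c : R) : \sum_o pr_out a c o = 1.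
Proof. rewrite sum_outcome /pr_out /=; ring. Qed.

Lemma pr_out_swap (a c : R) o : pr_out a c (swap_out o) = pr_out c a o.
Proof. by rewrite /pr_out /= mulrC. Qed.

End Out.

End MP3.

Module MP5.
Set Implicit Arguments. Unset Strict Implicit. Unset Printing Implicit Defensive.
Import Order.TTheory GRing.Theory Num.Theory.
Import numFieldNormedType.Exports.
Import ring lra zify.
Local Open Scope ring_scope.
Import MP1 MP2 MP3.

Section Cvgs.
Variable R : realType.

Definition cvgs (u : nat -> R) (l : R) :=
  forall e : R, 0 < e -> exists N, forall n, (N <= n)%N -> `|u n - l| < e.

Lemma cvgs_lim u l : cvgs u l -> limn u = l.
Proof.
move=> h; apply: cvg_lim => //.
apply/cvgrPdist_lt => e e0.
have [N HN] := h e e0.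
exists N => // n /= hn; rewrite distrC; exact: HN.
Qed.

Lemma cvgs_cst (c : R) : cvgs (fun _ => c) c.
Proof. by move=> e e0; exists 0%N => n _; rewrite subrr normr0. Qed.

Lemma cvgsD u w a b : cvgs u a -> cvgs w b -> cvgs (fun n => u n + w n) (a + b).
Proof.
move=> hu hw e e0.
have e20 : 0 < e / 2 by rewrite divr_gt0.
have [N1 H1] := hu _ e20; have [N2 H2] := hw _ e20.
exists (maxn N1 N2) => n; rewrite geq_max => /andP[h1 h2].
have := H1 _ h1; have := H2 _ h2 => k2 k1.
have -> : u n + w n - (a + b) = (u n - a) + (w n - b) by ring.
apply: le_lt_trans (ler_normD _ _) _.
have -> : e = e / 2 + e / 2 by field.
exact: ltrD.
Qed.

Lemma cvgsMl (c : R) u a : cvgs u a -> cvgs (fun n => c * u n) (c * a).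
Proof.
move=> hu e e0.
have c1 : 0 < `|c| + 1 by rewrite ltr_pwDr // normr_ge0.
have [N H] := hu (e / (`|c| + 1)) (divr_gt0 e0 c1).
exists N => n hn; rewrite -mulrBr normrM.
apply: (@le_lt_trans _ _ ((`|c| + 1) * `|u n - a|)).
  by rewrite ler_wpM2r ?normr_ge0 // lerDl.
by rewrite mulrC -ltr_pdivlMr //; exact: H.
Qed.

Lemma cvgs_unique u a b : cvgs u a -> cvgs u b -> a = b.
Proof.
move=> ha hb; apply/eqP; apply/negPn/negP => hne.
have d0 : 0 < `|a - b| / 2 by rewrite divr_gt0 // normr_gt0 subr_eq0.
have [N1 H1] := ha _ d0; have [N2 H2] := hb _ d0.
have k1 := H1 (maxn N1 N2) (leq_maxl _ _).
have k2 := H2 (maxn N1 N2) (leq_maxr _ _).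
have : `|a - b| < `|a - b| / 2 + `|a - b| / 2.
  have -> : a - b = (u (maxn N1 N2) - b) - (u (maxn N1 N2) - a) by ring.
  apply: le_lt_trans (ler_normB _ _) _.
  have -> : `|u (maxn N1 N2) - b - (u (maxn N1 N2) - a)| = `|a - b|.
    by congr `|_|; ring.
  by rewrite ltrD.
by rewrite -splitr ltxx.
Qed.

Lemma cvgs_ge0 u a : (forall n, 0 <= u n) -> cvgs u a -> 0 <= a.
Proof.
move=> h hu; rewrite leNgt; apply/negP => a0.
have [N H] := hu (- a) ltac:(by rewrite oppr_gt0).
have := H N (leqnn N); have := h N.
rewrite ltr_norml => u0 /andP[_] ua; lra.
Qed.

Lemma cvgs_ext u w a : (forall n, u n = w n) -> cvgs u a -> cvgs w a.
Proof. by move=> h hu e e0; have [N H] := hu e e0; exists N => n hn; rewrite -h H. Qed.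

End Cvgs.

End MP5.

Module MP4.
Set Implicit Arguments. Unset Strict Implicit. Unset Printing Implicit Defensive.
Import Order.TTheory GRing.Theory Num.Theory.
Import numFieldNormedType.Exports.
Import ring lra zify.
Local Open Scope ring_scope.
Import MP1 MP2 MP3 MP5.

Section Chain.
Variable R : realType.

Lemma cvgs_sum_out (u : nat -> outcome -> R) (l : outcome -> R) :
  (forall o, cvgs (fun n => u n o) (l o)) ->
  cvgs (fun n => \sum_o u n o) (\sum_o l o).
Proof.
move=> h; rewrite sum_outcome.
apply: (cvgs_ext (u := fun n => u n (true, true) + u n (true, false) +
   u n (false, true) + u n (false, false))); first by move=> n; rewrite sum_outcome.
by apply: cvgsD; [apply: cvgsD; [apply: cvgsD|]|]; apply: h.
Qed.

Lemma sum_enum (F : outcome -> R) :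
  \sum_(i < #|{: outcome}|) F (enum_val i) = \sum_o F o.
Proof.
rewrite [RHS](reindex (@enum_val outcome (pred_of_simpl predT))) //.
exact: onW_bij (@enum_val_bij _).
Qed.

Variables (p q : outcome -> R) (x0 y0 : R).
Hypotheses (hp : mem1_vec p) (hq : mem1_vec q) (hx : prob x0) (hy : prob y0).

Definition MM : 'M[R]_#|{: outcome}| :=
  \matrix_(i, j) Mtr p q (enum_val i) (enum_val j).
Definition mu0 : 'rV[R]_#|{: outcome}| := \row_j pr_out x0 y0 (enum_val j).

Lemma MM_ge0 i j : 0 <= MM i j.
Proof. by rewrite mxE; apply: pr_out_ge0. Qed.

Lemma MM_sum1 i : \sum_j MM i j = 1.
Proof.
under eq_bigr => j _ do rewrite mxE.
by rewrite (sum_enum (fun o => Mtr p q (enum_val i) o)) pr_out_sum.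
Qed.

Lemma Dist_pw n o : Dist p x0 q y0 n o = pw MM n mu0 0 (enum_rank o).
Proof.
elim: n o => [|n IH] o.
  by rewrite /pw /= mxE enum_rankK.
rewrite pwS mxE /= -(sum_enum (fun o1 => Dist p x0 q y0 n o1 * Mtr p q o1 o)).
apply: eq_bigr => i _.
by rewrite IH enum_valK mxE enum_rankK.
Qed.

Lemma Mtr_ge0 o o' : 0 <= Mtr p q o o'.
Proof. exact: pr_out_ge0. Qed.

Lemma Mtr_sum o : \sum_o' Mtr p q o o' = 1.
Proof. exact: pr_out_sum. Qed.

Lemma Dist_ge0 n o : 0 <= Dist p x0 q y0 n o.
Proof.
elim: n o => [|n IH] o /=; first exact: pr_out_ge0.
by apply: sumr_ge0 => o1 _; apply: mulr_ge0 => //; apply: Mtr_ge0.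
Qed.

Lemma Dist_sum n : \sum_o Dist p x0 q y0 n o = 1.
Proof.
elim: n => [|n IH] /=; first exact: pr_out_sum.
rewrite exchange_big /= -[RHS]IH; apply: eq_bigr => o _.
by rewrite -mulr_sumr Mtr_sum mulr1.
Qed.

Lemma cesaroE n o : Defs.cesaro p x0 (mem1_pattern q y0) n o =
  (n.+1%:R)^-1 * \sum_(k < n.+1) Dist p x0 q y0 k o.
Proof. by rewrite /Defs.cesaro; under eq_bigr => k _ do rewrite round_distE. Qed.

Lemma cesaro_ge0 n o : 0 <= Defs.cesaro p x0 (mem1_pattern q y0) n o.
Proof.
rewrite cesaroE; apply: mulr_ge0; first by rewrite invr_ge0.
by apply: sumr_ge0 => k _; exact: Dist_ge0.
Qed.

Lemma cesaro_sum n : \sum_o Defs.cesaro p x0 (mem1_pattern q y0) n o = 1.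
Proof.
under eq_bigr => o _ do rewrite cesaroE.
rewrite -mulr_sumr exchange_big /=.
under eq_bigr => k _ do rewrite Dist_sum.
by rewrite sumr_const card_ord mulVf // pnatr_eq0.
Qed.

Lemma cesaro_pw n o : Defs.cesaro p x0 (mem1_pattern q y0) n o =
  cesM MM n mu0 0 (enum_rank o).
Proof.
rewrite cesaroE /cesM !mxE summxE; congr (_ * _); apply: eq_bigr => k _.
by rewrite Dist_pw.
Qed.

Lemma chain_cvg : exists v : outcome -> R,
  [/\ (forall o, 0 <= v o), \sum_o v o = 1,
      (forall o', \sum_o v o * Mtr p q o o' = v o') &
      (forall o, cvgs (fun n => Defs.cesaro p x0 (mem1_pattern q y0) n o) (v o))].
Proof.
have [a [ha hcv]] := cesM_cvg MM_ge0 MM_sum1 mu0.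
have cv : forall o, cvgs (fun n => Defs.cesaro p x0 (mem1_pattern q y0) n o)
                         (a 0 (enum_rank o)).
  move=> o e e0; have [N HN] := hcv (enum_rank o) e e0.
  by exists N => n hn; rewrite cesaro_pw; apply: HN.
exists (fun o => a 0 (enum_rank o)); split => //.
- move=> o; apply: (cvgs_ge0 _ (cv o)) => n; exact: cesaro_ge0.
- apply: (cvgs_unique (u := fun n => \sum_o Defs.cesaro p x0 (mem1_pattern q y0) n o)).
    exact: cvgs_sum_out.
  by apply: (cvgs_ext (u := fun _ => 1)) => [n|]; [rewrite cesaro_sum|exact: cvgs_cst].
- move=> o'.
  have := congr1 (fun X : 'rV_#|{: outcome}| => X 0 (enum_rank o')) ha.
  rewrite /= mxE => <-.
  rewrite -(sum_enum (fun o => a 0 (enum_rank o) * Mtr p q o o')).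
  by apply: eq_bigr => i _; rewrite enum_valK mxE enum_rankK.
Qed.

End Chain.

End MP4.

Module MP6.
Set Implicit Arguments. Unset Strict Implicit. Unset Printing Implicit Defensive.
Import Order.TTheory GRing.Theory Num.Theory.
Import numFieldNormedType.Exports.
Import ring lra zify.
Local Open Scope ring_scope.
Import MP1 MP2 MP3 MP5 MP4.

Section ESSsec.
Variable R : realType.

Lemma swap_outK : involutive swap_out.
Proof. by case. Qed.

Lemma Dist_swap (p q : outcome -> R) x0 y0 n o :
  Dist p x0 q y0 n o = Dist q y0 p x0 n (swap_out o).
Proof.
elim: n o => [|n IH] o /=; first by rewrite pr_out_swap.
rewrite [RHS](reindex_inj (inv_inj swap_outK)) /=.
apply: eq_bigr => o1 _; rewrite -IH; congr (_ * _).
by rewrite /Mtr swap_outK pr_out_swap.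
Qed.

Lemma cesaro_swap (p q : outcome -> R) x0 y0 n o :
  Defs.cesaro p x0 (mem1_pattern q y0) n o =
  Defs.cesaro q y0 (mem1_pattern p x0) n (swap_out o).
Proof.
rewrite !cesaroE; congr (_ * _); apply: eq_bigr => k _; exact: Dist_swap.
Qed.

Lemma sXv_swap (T Rw P S : R) (c : outcome -> R) :
  sXv T Rw P S (fun o => c (swap_out o)) = sYv T Rw P S c.
Proof.
rewrite /sXv /sYv (reindex_inj (inv_inj swap_outK)) /=.
by apply: eq_bigr => -[[] []] _.
Qed.

Lemma Dist_agree (p : outcome -> R) n o : agreeable p ->
  Dist p 1 p 1 n o = (o == (true, true))%:R.
Proof.
move=> hp; elim: n o => [|n IH] o /=.
  by case: o => [[] []]; rewrite /pr_out /= ?subrr ?mulr0 ?mul0r ?mulr1.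
rewrite (bigD1 (true, true)) //= big1 ?addr0; last first.
  by move=> o1 /negbTE h; rewrite IH h mul0r.
rewrite IH eqxx mul1r /Mtr /= hp.
by case: o => [[] []]; rewrite /pr_out /= ?subrr ?mulr0 ?mul0r ?mulr1.
Qed.

Lemma cvgs_wsum (u : nat -> outcome -> R) (l : outcome -> R) (w : outcome -> R) :
  (forall o, cvgs (fun n => u n o) (l o)) ->
  cvgs (fun n => \sum_o u n o * w o) (\sum_o l o * w o).
Proof.
move=> h; apply: cvgs_sum_out => o.
apply: (cvgs_ext (u := fun n => w o * u n o)); first by move=> n; rewrite mulrC.
rewrite mulrC; exact: cvgsMl.
Qed.

Lemma cesaro_agree (p : outcome -> R) n o : agreeable p ->
  Defs.cesaro p 1 (mem1_pattern p 1) n o = (o == (true, true))%:R.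
Proof.
move=> hp; rewrite cesaroE.
under eq_bigr => k _ do rewrite Dist_agree //.
by rewrite sumr_const card_ord -[X in _ * X]mulr_natr mulrCA mulVf ?pnatr_eq0 // mulr1.
Qed.

Lemma payoff_diag (T Rw P S : R) (I : finType) (p : I -> outcome -> R)
  (x0 : I -> R) i : agreeable (p i) -> x0 i = 1 ->
  payoff_matrix T Rw P S p x0 i i = Rw.
Proof.
move=> hp hx; rewrite /payoff_matrix hx.
apply: cvgs_lim; apply: (cvgs_ext (u := fun _ => Rw)); last exact: cvgs_cst.
move=> n; rewrite /sXv sum_outcome !cesaro_agree //=.
by rewrite !mul0r !addr0 mul1r.
Qed.

Lemma payoff_off (T Rw P S : R) (I : finType) (p : I -> outcome -> R)
  (x0 : I -> R) istar j :
  is_PD T Rw P S -> (forall i, mem1_vec (p i)) -> (forall i, prob (x0 i)) ->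
  good T Rw P S (p istar) -> x0 istar = 1 -> ~ agreeable (p j) ->
  payoff_matrix T Rw P S p x0 j istar < Rw.
Proof.
move=> [hSP hPR hRT hTS] hp hx [hag hgood] hx1 hnag.
have hx1' : prob (x0 istar) by [].
have [v [v0 v1 vst vcv]] := chain_cvg (hp istar) (hp j) hx1' (hx j).
have hA : payoff_matrix T Rw P S p x0 j istar = sYv T Rw P S v.
  rewrite /payoff_matrix; apply: cvgs_lim.
  apply: (cvgs_ext (u := fun n => sYv T Rw P S
      (Defs.cesaro (p istar) (x0 istar) (mem1_pattern (p j) (x0 j)) n))).
    move=> n; rewrite -sXv_swap; congr (sXv _ _ _ _ _).
    by apply: funext => o; rewrite cesaro_swap.
  exact: cvgs_wsum.
rewrite hA ltNge; apply/negP => hge.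
have hld : limit_dist (p istar) (x0 istar) (mem1_pattern (p j) (x0 j)) v.
  move=> e e0 N.
  have [N1 H1] := vcv (true, true) e e0.
  have [N2 H2] := vcv (true, false) e e0.
  have [N3 H3] := vcv (false, true) e e0.
  have [N4 H4] := vcv (false, false) e e0.
  exists (N + N1 + N2 + N3 + N4)%N; split; first by rewrite -!addnA leq_addr.
  move=> [[] []]; [apply: H1|apply: H2|apply: H3|apply: H4]; lia.
have hpat : pattern_valid (mem1_pattern (p j) (x0 j)).
  by move=> [|o h] /=; [exact: hx|exact: hp].
have [eY eX] := hgood _ _ _ (hx istar) hpat hld hge.
move: eY eX; rewrite /sYv /sXv !sum_outcome /= => eY eX.
move: v1; rewrite sum_outcome => v1.
have a0 := v0 (true, true); have b0 := v0 (true, false).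
have c0 := v0 (false, true); have d0 := v0 (false, false).
have hb : v (true, false) = 0 by nra.
have hc : v (false, true) = 0 by nra.
have hd : v (false, false) = 0 by nra.
have ha : v (true, true) = 1 by lra.
have := vst (true, true); rewrite sum_outcome hb hc hd ha /Mtr /pr_out /= hag.
rewrite !mul0r !addr0 !mul1r => hpj; apply: hnag; exact: hpj.
Qed.

End ESSsec.

End MP6.

Module MP7.
Set Implicit Arguments. Unset Strict Implicit. Unset Printing Implicit Defensive.
Import Order.TTheory GRing.Theory Num.Theory.
Import numFieldNormedType.Exports.
Import ring lra zify.
Local Open Scope ring_scope.
Local Open Scope classical_set_scope.
Import MP1 MP2 MP3 MP5 MP4 MP6.

Section ContInd.
Variable R : realType.

Lemma cont_ind (G : R -> Prop) :
  G 0 ->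
  (forall t, 0 < t -> (forall s, 0 <= s -> s < t -> G s) -> G t) ->
  (forall t, 0 <= t -> G t -> exists2 eta, 0 < eta &
       forall s, t <= s -> s < t + eta -> G s) ->
  forall t, 0 <= t -> G t.
Proof.
move=> G0 Hl Hr t1 t10; apply: contrapT => nG.
pose B := [set t : R | 0 <= t /\ forall s, 0 <= s -> s <= t -> G s].
have B0 : B 0 by split => // s s0 s00; have -> : s = 0 by apply/eqP; rewrite eq_le s00.
have Bub : ubound B t1.
  move=> b [b0 hb]; rewrite leNgt; apply/negP => hlt.
  by apply: nG; apply: hb => //; exact: ltW.
have hs : has_sup B by split; [exists 0 | exists t1].
set sg := sup B.
have sg0 : 0 <= sg by apply: sup_upper_bound.
have below : forall s, 0 <= s -> s < sg -> G s.
  move=> s s0 ssg.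
  have e0 : 0 < sg - s by rewrite subr_gt0.
  have [b [b0 hb] hbs] := sup_adherent e0 hs.
  apply: hb => //; move: hbs; rewrite /sg opprB addrCA subrr addr0 => /ltW //.
have Gsg : G sg.
  have [->//|sg_pos] := eqVneq sg 0.
  apply: Hl => //; rewrite lt_neqAle eq_sym sg_pos sg0 //.
have [eta eta0 Heta] := Hr sg sg0 Gsg.
have : B (sg + eta / 2).
  split; first by apply: addr_ge0 => //; apply: divr_ge0 => //; exact: ltW.
  move=> s s0 hs2.
  have [slt|sge] := ltP s sg; first exact: below.
  apply: Heta => //; apply: le_lt_trans hs2 _.
  by rewrite ltrD2l ltr_pdivrMr // ltr_pMr // ltr1n.
move/(sup_upper_bound hs); rewrite -/sg => h.
have : sg < sg + eta / 2 by rewrite ltrDl divr_gt0.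
by rewrite ltNge h.
Qed.

End ContInd.

End MP7.

Module MP8.
Set Implicit Arguments. Unset Strict Implicit. Unset Printing Implicit Defensive.
Import Order.TTheory GRing.Theory Num.Theory.
Import numFieldNormedType.Exports.
Import ring lra zify.
Local Open Scope ring_scope.
Import MP1 MP2 MP3 MP5 MP4 MP6 MP7.

Section Est.
Variable R : realType.
Variables (I : finType) (A : I -> I -> R) (istar : I).

Definition fi (x : I -> R) i := \sum_j x j * A i j.
Definition Phi (x : I -> R) := \sum_k x k * fi x k.

Lemma repl_fieldE x i : repl_field A x i = x i * (fi x i - Phi x).
Proof. by []. Qed.

Definition Kc := 1 + \sum_k \sum_j `|A k j|.

Lemma sumA_ge0 : 0 <= \sum_k \sum_j `|A k j|.
Proof. by apply: sumr_ge0 => k _; apply: sumr_ge0 => j _; exact: normr_ge0. Qed.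

Lemma Kc_gt0 : 0 < Kc.
Proof. by rewrite /Kc ltr_pwDl // sumA_ge0. Qed.

Lemma rowsum_le j : \sum_l `|A j l| <= \sum_k \sum_l `|A k l|.
Proof.
rewrite [X in _ <= X](bigD1 j) //= lerDl; apply: sumr_ge0 => k _.
by apply: sumr_ge0 => l _; exact: normr_ge0.
Qed.

Lemma entry_le k l : `|A k l| <= Kc.
Proof.
apply: (@le_trans _ _ (\sum_m `|A k m|)).
  by rewrite [X in _ <= X](bigD1 l) //= lerDl; apply: sumr_ge0 => m _; exact: normr_ge0.
by apply: le_trans (rowsum_le k) _; rewrite /Kc lerDr.
Qed.

Local Notation v := (vertex R istar).

Lemma vsum (F : I -> R) : \sum_l v l * F l = F istar.
Proof.
rewrite (bigD1 istar) //= big1 ?addr0; first by rewrite /vertex eqxx mul1r.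
by move=> l /negbTE h; rewrite /vertex h mul0r.
Qed.

Lemma fi_v j : fi v j = A j istar.
Proof. exact: vsum. Qed.

Lemma Phi_v : Phi v = A istar istar.
Proof. by rewrite /Phi vsum fi_v. Qed.

Lemma fi_close x d : (forall i, `|x i - v i| <= d) ->
  forall j, `|fi x j - A j istar| <= d * Kc.
Proof.
move=> hx j; have d0 : 0 <= d := le_trans (normr_ge0 _) (hx istar).
rewrite -fi_v /fi -sumrB.
apply: le_trans (ler_norm_sum _ _ _) _.
apply: (@le_trans _ _ (\sum_l d * `|A j l|)).
  apply: ler_sum => l _; rewrite -mulrBl normrM.
  by apply: ler_wpM2r => //; exact: normr_ge0.
rewrite -mulr_sumr ler_wpM2l //; apply: le_trans (rowsum_le j) _.
by rewrite /Kc lerDr.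
Qed.

Lemma PhiE x : Phi x = \sum_k \sum_l x k * x l * A k l.
Proof.
by apply: eq_bigr => k _; rewrite /fi mulr_sumr; apply: eq_bigr => l _; rewrite mulrA.
Qed.

Lemma Phi_close x d : d <= 1 -> (forall i, `|x i - v i| <= d) ->
  `|Phi x - A istar istar| <= 3 * d * Kc.
Proof.
move=> d1 hx; have d0 : 0 <= d := le_trans (normr_ge0 _) (hx istar).
rewrite -Phi_v !PhiE -sumrB.
apply: le_trans (ler_norm_sum _ _ _) _.
apply: (@le_trans _ _ (\sum_k \sum_l 3 * d * `|A k l|)); last first.
  under eq_bigr => k _ do rewrite -mulr_sumr.
  rewrite -mulr_sumr ler_wpM2l ?mulr_ge0 //; by rewrite /Kc lerDr.
apply: ler_sum => k _; rewrite -sumrB.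
apply: le_trans (ler_norm_sum _ _ _) _.
apply: ler_sum => l _; rewrite -mulrBl normrM.
apply: ler_wpM2r; first exact: normr_ge0.
have vk : `|v k| <= 1 by rewrite /vertex; case: ifP; rewrite ?normr1 ?normr0.
have vl : `|v l| <= 1 by rewrite /vertex; case: ifP; rewrite ?normr1 ?normr0.
have xk : `|x k| <= 2.
  have -> : x k = (x k - v k) + v k by rewrite subrK.
  apply: le_trans (ler_normD _ _) _; have := hx k; lra.
have -> : x k * x l - v k * v l = x k * (x l - v l) + v l * (x k - v k) by ring.
apply: le_trans (ler_normD _ _) _; rewrite !normrM.
have h1 : `|x k| * `|x l - v l| <= 2 * d.
  by apply: ler_pM; [exact: normr_ge0|exact: normr_ge0|exact: xk|exact: hx].
have h2 : `|v l| * `|x k - v k| <= 1 * d.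
  by apply: ler_pM; [exact: normr_ge0|exact: normr_ge0|exact: vl|exact: hx].
lra.
Qed.

Lemma Phi_bound x : (forall i, `|x i - v i| <= 1) -> `|Phi x| <= 4 * Kc.
Proof.
move=> hx; have := Phi_close (lexx 1) hx; have := entry_le istar istar.
have := ler_normD (Phi x - A istar istar) (A istar istar).
rewrite subrK; lra.
Qed.

Lemma gap_exists : (forall j, j != istar -> A j istar < A istar istar) ->
  exists2 c, 0 < c & forall j, j != istar -> A j istar + c <= A istar istar.
Proof.
move=> hess.
have H : forall s : seq I, exists2 c, 0 < c &
    forall j, j \in s -> j != istar -> A j istar + c <= A istar istar.
  elim => [|x s [c c0 hc]]; first by exists 1.
  have [hx|hx] := eqVneq x istar.
    exists c => // j; rewrite inE => /orP[/eqP->|js] hj; last exact: hc.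
    by rewrite hx eqxx in hj.
  have hxg : 0 < A istar istar - A x istar by rewrite subr_gt0 hess.
  exists (Num.min c (A istar istar - A x istar)); first by rewrite lt_min c0.
  move=> j; rewrite inE => /orP[/eqP->|js] hj.
    by rewrite -lerBrDl ge_min lexx orbT.
  apply: le_trans (hc j js hj); by rewrite lerD2l ge_min lexx.
have [c c0 hc] := H (enum I); exists c => // j hj; apply: hc => //.
by rewrite mem_enum.
Qed.

Lemma g_neg c x d : 0 < c ->
  (forall j, j != istar -> A j istar + c <= A istar istar) ->
  d <= Num.min 1 (c / (8 * Kc)) ->
  (forall i, `|x i - v i| <= d) ->
  forall j, j != istar -> fi x j - Phi x <= - (c / 2).
Proof.
move=> c0 hc hd hx j hj.
have d1 : d <= 1 by apply: le_trans hd _; rewrite ge_min lexx.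
have dK : d <= c / (8 * Kc) by apply: le_trans hd _; rewrite ge_min lexx orbT.
have K0 := Kc_gt0.
have dK' : d * Kc <= c / 8.
  by move: dK; rewrite ler_pdivlMr ?mulr_gt0 // => h; rewrite ler_pdivlMr //; lra.
have h1 := fi_close hx j; have h2 := Phi_close d1 hx; have h3 := hc j hj.
move: h1 h2; rewrite !ler_norml => /andP[_ h1] /andP[h2 _].
lra.
Qed.

End Est.

End MP8.

Module MP9.
Set Implicit Arguments. Unset Strict Implicit. Unset Printing Implicit Defensive.
Import Order.TTheory GRing.Theory Num.Theory.
Import numFieldNormedType.Exports.
Import ring lra zify.
Local Open Scope ring_scope.
Import MP1 MP2 MP3 MP5 MP4 MP6 MP7 MP8.

Section Helpers.
Variable R : realType.

Lemma cont_of_derive (f : R -> R) (t df : R) : is_derive t 1 f df -> {for t, continuous f}.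
Proof.
move=> hd; apply: differentiable_continuous; apply/derivable1_diffP.
exact: ex_derive.
Qed.

Lemma cont_eps (f : R -> R) (t : R) : {for t, continuous f} ->
  forall e, 0 < e -> exists2 eta, 0 < eta & forall s, `|s - t| < eta -> `|f s - f t| < e.
Proof.
move=> cf e e0; move: (cf) => /cvgr_distC_lt /(_ e e0).
move/nbhs_normP => [eta /= eta0 H]; exists eta => // s hs.
apply: H => /=; by rewrite distrC.
Qed.

Lemma mono_nonincr (f df : R -> R) (a b : R) : a <= b ->
  (forall t : R, is_derive t 1 f (df t)) -> (forall t, a < t -> t < b -> df t <= 0) ->
  f b <= f a.
Proof.
move=> ab hd hneg.
apply: (@ler0_derive1_le_cc R f a b).
- by move=> x _; exact: ex_derive.
- move=> x; rewrite in_itv /= => /andP[ax xb].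
  by rewrite derive1E derive_val; apply: hneg.
- apply: derivable_within_continuous => x _; exact: ex_derive.
- by rewrite in_itv /= lexx ab.
- by rewrite in_itv /= lexx ab.
- by [].
Qed.

Lemma is_derive_bigsum (I : finType) (F : I -> R -> R) (dF : I -> R) (t : R) :
  (forall i, is_derive t 1 (F i) (dF i)) ->
  is_derive t 1 (fun s => \sum_i F i s) (\sum_i dF i).
Proof.
move=> h.
have -> : (fun s => \sum_i F i s) = \sum_i F i.
  by apply/funext => s; rewrite fct_sumE.
elim/big_ind2 : _ => //.
- exact: is_derive_cst.
- by move=> f1 d1 f2 d2 h1 h2; apply: is_deriveD.
Qed.

Lemma is_derive_expM (c t : R) :
  is_derive t 1 (fun s => expR (c * s)) (c * expR (c * t)).
Proof.
have h := is_deriveZ c (@is_derive_id _ _ t 1).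
have hl : is_derive t 1 (fun s : R => c * s) c.
  by apply: (is_derive_eq h); rewrite /GRing.scale /= mulr1.
have d1 : derivable (fun s : R => c * s) t 1 by exact: ex_derive.
have d2 : derivable expR (c * t) 1 by exact: ex_derive.
apply: DeriveDef.
  apply/derivable1_diffP.
  have -> : (fun s => expR (c * s)) = expR \o (fun s : R => c * s) by [].
  apply: differentiable_comp; exact/derivable1_diffP.
rewrite -derive1E.
have -> : (fun s => expR (c * s)) = expR \o (fun s : R => c * s) by [].
rewrite derive1_comp // !derive1E !derive_val mulrC.
done.
Qed.

Lemma fin_eta (I : finType) (Q : I -> R -> Prop) (t : R) :
  (forall i, exists2 eta, 0 < eta & forall s, `|s - t| < eta -> Q i s) ->
  exists2 eta, 0 < eta & forall s, `|s - t| < eta -> forall i, Q i s.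
Proof.
move=> h.
have H : forall l : seq I, exists2 eta, 0 < eta &
    forall s, `|s - t| < eta -> forall i, i \in l -> Q i s.
  elim => [|x l [e e0 He]]; first by exists 1.
  have [ex ex0 Hx] := h x.
  exists (Num.min e ex); first by rewrite lt_min e0 ex0.
  move=> s; rewrite lt_min => /andP[h1 h2] i; rewrite inE => /orP[/eqP->|il].
    exact: Hx.
  exact: He.
have [e e0 He] := H (enum I); exists e => // s hs i; apply: He => //.
by rewrite mem_enum.
Qed.

End Helpers.

End MP9.

Module MP10.
Set Implicit Arguments. Unset Strict Implicit. Unset Printing Implicit Defensive.
Import Order.TTheory GRing.Theory Num.Theory.
Import numFieldNormedType.Exports.
Import ring lra zify.
Local Open Scope ring_scope.
Import MP1 MP2 MP3 MP5 MP4 MP6 MP7 MP8 MP9.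

Lemma fin_M (R : realType) (I : finType) (Q : I -> R -> Prop) :
  (forall i, exists M, forall t, M <= t -> Q i t) ->
  exists M, forall t, M <= t -> forall i, Q i t.
Proof.
move=> h.
have H : forall l : seq I, exists M, forall t, M <= t -> forall i, i \in l -> Q i t.
  elim => [|x l [M HM]]; first by exists 0.
  have [Mx HMx] := h x.
  exists (Num.max M Mx) => t; rewrite ge_max => /andP[h1 h2] i.
  rewrite inE => /orP[/eqP->|il]; [exact: HMx|exact: HM].
have [M HM] := H (enum I); exists M => t ht i; apply: HM => //.
by rewrite mem_enum.
Qed.

Section Dyn.
Variable R : realType.
Variables (I : finType) (A : I -> I -> R) (istar : I) (sol : R -> I -> R).
Hypothesis hsol : repl_solution A sol.
Local Notation v := (vertex R istar).
Local Notation K := (Kc A).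

Lemma dsol i (t : R) :
  is_derive t 1 (fun s => sol s i) (sol t i * (fi A (sol t) i - Phi A (sol t))).
Proof. exact: hsol. Qed.

Definition Ssum (t : R) := \sum_i sol t i.

Lemma dS (t : R) : is_derive t 1 Ssum ((1 - Ssum t) * Phi A (sol t)).
Proof.
have h := is_derive_bigsum (fun i => dsol i t).
apply: (is_derive_eq h).
rewrite /Ssum mulrBl mul1r mulr_suml.
under eq_bigr => i _ do rewrite mulrBr.
by rewrite sumrB.
Qed.

Lemma dsq (f : R -> R) (t df : R) : is_derive t 1 f df ->
  is_derive t 1 (fun s => f s * f s) (2 * f t * df).
Proof.
move=> h; have := is_deriveM h h.
move=> h2; apply: (is_derive_eq h2).
by rewrite /GRing.scale /=; ring.
Qed.

Lemma dprod (f g : R -> R) (t df dg : R) : is_derive t 1 f df ->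
  is_derive t 1 g dg -> is_derive t 1 (fun s => f s * g s) (f t * dg + g t * df).
Proof.
move=> hf hg; have h2 := is_deriveM hf hg.
by apply: (is_derive_eq h2); rewrite /GRing.scale /=.
Qed.

Lemma S_const (t : R) : 0 <= t -> Ssum 0 = 1 ->
  (forall s, 0 < s -> s < t -> `|Phi A (sol s)| <= 4 * K) -> Ssum t = 1.
Proof.
move=> t0 S0 hb.
pose c8 := 8 * K.
pose W s := ((1 - Ssum s) * (1 - Ssum s)) * expR (- c8 * s).
pose dW s := - ((1 - Ssum s) * (1 - Ssum s) * expR (- c8 * s) * (c8 + 2 * Phi A (sol s))).
have hW : forall s : R, is_derive s 1 W (dW s).
  move=> s.
  have h1 : is_derive s 1 (fun s : R => 1 - Ssum s) (- ((1 - Ssum s) * Phi A (sol s))).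
    have := is_deriveB (is_derive_cst (1 : R) s 1) (dS s).
    by move=> h; apply: (is_derive_eq h); rewrite sub0r.
  have h2 := dsq h1.
  have h3 := dprod h2 (is_derive_expM (- c8) s).
  apply: (is_derive_eq h3); rewrite /dW; ring.
have := mono_nonincr t0 hW.
have hneg : forall s, 0 < s -> s < t -> dW s <= 0.
  move=> s s0 st; rewrite /dW oppr_le0.
  apply: mulr_ge0; first by apply: mulr_ge0; [rewrite -expr2 sqr_ge0|exact: expR_ge0].
  have := hb s s0 st; rewrite ler_norml /c8 => /andP[h _]; lra.
move=> /(_ hneg); rewrite /W S0 subrr !mul0r => hle.
have e0 := expR_gt0 (- c8 * t).
have hsq : (1 - Ssum t) * (1 - Ssum t) = 0.
  apply/eqP; rewrite eq_le -expr2 sqr_ge0 andbT.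
  have q0 : 0 <= (1 - Ssum t) * (1 - Ssum t) by rewrite -expr2 sqr_ge0.
  rewrite expr2; nra.
by move: hsq => /eqP; rewrite mulf_eq0 orbb subr_eq0 => /eqP <-.
Qed.

Lemma dlin (k t : R) : is_derive t 1 (fun s : R => k * s) k.
Proof.
have h := is_deriveZ k (@is_derive_id _ _ t 1).
by apply: (is_derive_eq h); rewrite /GRing.scale /= mulr1.
Qed.

Definition gi (t : R) i := fi A (sol t) i - Phi A (sol t).

Lemma dY i (t : R) : is_derive t 1 (fun s => sol s i * sol s i)
   (2 * (sol t i * sol t i) * gi t i).
Proof.
have h := dsq (dsol i t); apply: (is_derive_eq h); rewrite /gi; ring.
Qed.

Lemma Y_nonincr i (a b : R) : a <= b ->
  (forall s, a < s -> s < b -> gi s i <= 0) ->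
  sol b i * sol b i <= sol a i * sol a i.
Proof.
move=> ab hg; apply: (mono_nonincr ab (fun t => dY i t)) => s sa sb.
rewrite -mulrA; apply: mulr_ge0_le0 => //; apply: mulr_ge0_le0; last exact: hg.
by rewrite -expr2 sqr_ge0.
Qed.

Lemma Y_decay i (a b c e : R) : a <= b -> 0 < c ->
  (forall s, a < s -> s < b -> gi s i <= - (c / 2) /\ e * e <= sol s i * sol s i) ->
  sol b i * sol b i + c * (e * e) * (b - a) <= sol a i * sol a i.
Proof.
move=> ab c0 hs.
have hF : forall t : R, is_derive t 1 (fun s => sol s i * sol s i + c * (e * e) * s)
   (2 * (sol t i * sol t i) * gi t i + c * (e * e)).
  by move=> t; apply: is_deriveD; [exact: dY|exact: dlin].
have := mono_nonincr ab hF.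
have hneg : forall t, a < t -> t < b -> 2 * (sol t i * sol t i) * gi t i + c * (e * e) <= 0.
  move=> t ta tb; have [h1 h2] := hs t ta tb.
  have y0 : 0 <= sol t i * sol t i by rewrite -expr2 sqr_ge0.
  nra.
move=> /(_ hneg) /=; lra.
Qed.

Lemma vertex_ne i : i != istar -> v i = 0.
Proof. by rewrite /vertex => /negbTE ->. Qed.

Lemma sq_le_norm (x y : R) : x * x <= y * y -> `|x| <= `|y|.
Proof.
move=> h.
have hx : `|x| * `|x| = x * x by rewrite -normrM ger0_norm // -expr2 sqr_ge0.
have hy : `|y| * `|y| = y * y by rewrite -normrM ger0_norm // -expr2 sqr_ge0.
have := normr_ge0 x; have := normr_ge0 y; nra.
Qed.

Lemma Sstar (t : R) : Ssum t = 1 ->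
  sol t istar - v istar = - \sum_(i | i != istar) sol t i.
Proof.
rewrite /Ssum (bigD1 istar) //= /vertex eqxx => h.
by rewrite -h opprD addrA subrr add0r.
Qed.

Variables (c delta : R).
Hypothesis c0 : 0 < c.
Hypothesis hgap : forall j, j != istar -> A j istar + c <= A istar istar.
Hypothesis delta0 : 0 < delta.
Hypothesis delta1 : delta <= Num.min 1 (c / (8 * K)).
Hypothesis hsimp : in_simplex (sol 0).

Lemma delta_le1 : delta <= 1.
Proof. by apply: le_trans delta1 _; rewrite ge_min lexx. Qed.

Lemma S0 : Ssum 0 = 1.
Proof. by case: hsimp. Qed.

Lemma step_facts (t : R) : 0 <= t ->
  (forall s, 0 < s -> s < t -> forall i, `|sol s i - v i| <= delta) ->
  Ssum t = 1 /\ forall i, i != istar -> sol t i * sol t i <= sol 0 i * sol 0 i.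
Proof.
move=> t0 hs; split.
  apply: S_const => //; first exact: S0.
  move=> s s0 st; apply: Phi_bound => i.
  by apply: le_trans (hs s s0 st i) delta_le1.
move=> i hi; apply: Y_nonincr => // s s0 st.
have := g_neg c0 hgap delta1 (hs s s0 st) hi; rewrite /gi.
have : 0 <= c / 2 by rewrite divr_ge0 // ltW.
lra.
Qed.

Definition n1 : R := (#|I|.+1)%:R.

Lemma n1_gt0 : 0 < n1.
Proof. by rewrite /n1 ltr0n. Qed.

Lemma close_at (t : R) : 0 <= t ->
  (forall i, `|sol 0 i - v i| < delta / n1) ->
  (forall s, 0 < s -> s < t -> forall i, `|sol s i - v i| <= delta) ->
  forall i, `|sol t i - v i| < delta.
Proof.
move=> t0 h0 hs.
have [St hY] := step_facts t0 hs.
have dn : delta / n1 <= delta.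
  rewrite ler_pdivrMr ?n1_gt0 // ler_peMr ?(ltW delta0) // /n1 ler1n; done.
have hy : forall i, i != istar -> `|sol t i| < delta / n1.
  move=> i hi; apply: le_lt_trans (sq_le_norm (hY i hi)) _.
  by have := h0 i; rewrite vertex_ne // subr0.
move=> i; have [->|hi] := eqVneq i istar; last first.
  by rewrite vertex_ne // subr0; apply: lt_le_trans (hy i hi) dn.
rewrite Sstar // normrN.
apply: le_lt_trans (ler_norm_sum _ _ _) _.
apply: (@le_lt_trans _ _ (\sum_(j : I) delta / n1)).
  rewrite big_mkcond /=; apply: ler_sum => j _.
  case: ifP => hj; first exact: ltW (hy j hj).
  by apply: divr_ge0; [exact: ltW | exact: ltW n1_gt0].
rewrite sumr_const -mulr_natl /n1.
rewrite mulrA ltr_pdivrMr ?ltr0n //.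
by rewrite mulrC ltr_pM2l // ltr_nat ltnS.
Qed.

Lemma dn_le : delta / n1 <= delta.
Proof. by rewrite ler_pdivrMr ?n1_gt0 // ler_peMr ?(ltW delta0) // /n1 ler1n. Qed.

Lemma bootstrap : (forall i, `|sol 0 i - v i| < delta / n1) ->
  forall t, 0 <= t -> forall i, `|sol t i - v i| < delta.
Proof.
move=> h0; apply: cont_ind.
- by move=> i; apply: lt_le_trans (h0 i) dn_le.
- move=> t t0 H; apply: close_at => //; first exact: ltW.
  by move=> s s0 st i; apply: ltW; apply: H => //; exact: ltW.
- move=> t t0 Gt.
  have [eta eta0 He] : exists2 eta, 0 < eta &
      forall s, `|s - t| < eta -> forall i, `|sol s i - v i| < delta.
    apply: fin_eta => i.
    have e0 : 0 < delta - `|sol t i - v i| by rewrite subr_gt0.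
    have [eta eta0 He] := cont_eps (cont_of_derive (dsol i t)) e0.
    exists eta => // s hs.
    have := He s hs.
    have := ler_normD (sol s i - sol t i) (sol t i - v i).
    rewrite addrA subrK; lra.
  exists eta => // s ts st; apply: He.
  by rewrite ger0_norm ?subr_ge0 // ltrBlDl.
Qed.

Lemma converge : (forall i, `|sol 0 i - v i| < delta / n1) ->
  forall i e, 0 < e -> exists M, forall t, M <= t -> `|sol t i - v i| < e.
Proof.
move=> h0.
have G := bootstrap h0.
have hg : forall s, 0 < s -> forall i, i != istar -> gi s i <= - (c / 2).
  move=> s s0 i hi; apply: (@g_neg R I A istar c (sol s) delta c0 hgap delta1) => // j.
  apply: ltW; apply: G; exact: ltW.
have St : forall t, 0 <= t -> Ssum t = 1.
  move=> t t0; have [] := step_facts t0 => // s s0 st i.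
  apply: ltW; apply: G; exact: ltW.
have hne : forall i e, i != istar -> 0 < e ->
    exists M, forall t, M <= t -> `|sol t i| < e.
  move=> i e hi e0.
  set Y0 := sol 0 i * sol 0 i.
  have Y00 : 0 <= Y0 by rewrite /Y0 -expr2 sqr_ge0.
  have ce0 : 0 < c * (e * e) by rewrite mulr_gt0 // mulr_gt0.
  set T := Y0 / (c * (e * e)) + 1.
  have T0 : 0 < T by rewrite /T ltr_pwDr // divr_ge0 // ltW.
  have [[s [s0 sT hs]]|nex] := pselect (exists s, [/\ 0 < s, s < T &
      sol s i * sol s i < e * e]); last first.
    exfalso.
    have := @Y_decay i 0 T c e (ltW T0) c0.
    have hyp : forall s, 0 < s -> s < T -> gi s i <= - (c / 2) /\ e * e <= sol s i * sol s i.
      move=> s s0 sT; split; first exact: hg.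
      by rewrite leNgt; apply/negP => hlt; apply: nex; exists s; split.
    move=> /(_ hyp); rewrite subr0 -/Y0.
    have -> : c * (e * e) * T = Y0 + c * (e * e).
      rewrite /T mulrDr mulr1 mulrCA mulfV ?mulr1 //; exact: lt0r_neq0.
    have := sqr_ge0 (sol T i); rewrite expr2; lra.
  exists s => t st.
  have hY : sol t i * sol t i <= sol s i * sol s i.
    apply: Y_nonincr => // u su ut; apply: le_trans (hg u (lt_trans s0 su) i hi) _.
    by rewrite oppr_le0 divr_ge0 // ltW.
  have hx : `|sol t i| * `|sol t i| = sol t i * sol t i.
    by rewrite -normrM ger0_norm // -expr2 sqr_ge0.
  have := normr_ge0 (sol t i); nra.
move=> i e e0.
have [->|hi] := eqVneq i istar; last first.
  have [M HM] := hne i e hi e0; exists M => t tM.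
  by rewrite vertex_ne // subr0; exact: HM.
have en0 : 0 < e / n1 by rewrite divr_gt0 // n1_gt0.
have [M HM] : exists M, forall t, M <= t -> forall j, j != istar -> `|sol t j| < e / n1.
  apply: (fin_M (Q := fun j t => j != istar -> `|sol t j| < e / n1)) => j.
  have [->|hj] := eqVneq j istar; first by exists 0 => t _ /eqP.
  have [M HM] := hne j _ hj en0; exists M => t tM _; exact: HM.
exists (Num.max M 0) => t; rewrite ge_max => /andP[tM t0].
rewrite Sstar ?St // normrN.
apply: le_lt_trans (ler_norm_sum _ _ _) _.
apply: (@le_lt_trans _ _ (\sum_(j : I) e / n1)).
  rewrite big_mkcond /=; apply: ler_sum => j _.
  case: ifP => hj; first exact: ltW (HM t tM j hj).
  exact: ltW.
rewrite sumr_const -mulr_natl /n1.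
rewrite mulrA ltr_pdivrMr ?ltr0n //.
by rewrite mulrC ltr_pM2l // ltr_nat ltnS.
Qed.

End Dyn.

End MP10.

Import MP1 MP2 MP3 MP5 MP4 MP6 MP7 MP8 MP9 MP10.

Theorem theorem4p7 (R : realType) (T Rw P S : R) (I : finType)
  (p : I -> outcome -> R) (x0 : I -> R) (istar : I) :
  is_PD T Rw P S ->
  (forall i, mem1_vec (p i)) ->
  (forall i, prob (x0 i)) ->
  good T Rw P S (p istar) ->
  x0 istar = 1 ->
  (forall j, j != istar -> ~ agreeable (p j)) ->
  ESS (payoff_matrix T Rw P S p x0) istar /\
  attractor (payoff_matrix T Rw P S p x0) (vertex R istar).
Proof.
move=> hPD hp hx hgood hx1 hnag.
set Am := payoff_matrix T Rw P S p x0.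
have hdiag : Am istar istar = Rw := payoff_diag T Rw P S hgood.1 hx1.
have hess : forall j, j != istar -> Am j istar < Am istar istar.
  move=> j hj; rewrite hdiag; apply: payoff_off => //; exact: hnag.
split => //.
have [c c0 hgap] := gap_exists hess.
have K0 := Kc_gt0 Am.
set d0 := Num.min 1 (c / (8 * Kc Am)).
have d00 : 0 < d0 by rewrite lt_min ltr01 divr_gt0 // mulr_gt0.
split.
- split; first by move=> i; rewrite /vertex; case: ifP.
  by rewrite -[RHS](vsum istar (fun _ => 1 : R)); apply: eq_bigr => i _; rewrite mulr1.
- move=> i; rewrite repl_fieldE.
  have [->|hi] := eqVneq i istar.
    by rewrite fi_v Phi_v subrr mulr0.
  by rewrite /vertex (negbTE hi) mul0r.
- move=> e e0.
  set dl := Num.min e d0.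
  have dl0 : 0 < dl by rewrite lt_min e0 d00.
  exists (dl / n1 R I); split; first by rewrite divr_gt0 // n1_gt0.
  move=> sol hsol hsimp h0 t t0 i.
  apply: lt_le_trans (bootstrap hsol c0 hgap dl0 _ hsimp h0 t0 i) _.
    by rewrite /dl ge_min lexx orbT.
  by rewrite /dl ge_min lexx.
- exists (d0 / n1 R I); split; first by rewrite divr_gt0 // n1_gt0.
  move=> sol hsol hsimp h0 i e e0.
  exact: (converge hsol c0 hgap d00 (lexx _) hsimp h0 i e0).
Qed.
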